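(* Let $(\vec u,\vec B)$ and $(\vec t,\vec C)$ be proper factorization patterns over $A$, and let $(v_n)_n$ and $(w_n)_n$ be sequences of words such that $(v_n)_n$ is $(\vec u,\vec B)$-adequate, $(w_n)_n$ is $(\vec t,\vec C)$-adequate, and $v_n\sim_n w_n$ for every $n\ge0$. Then $\vec u=\vec t$ and $\vec B=\vec C$.
   Context: $\mathrm{alph}(u)$ is the set of letters of $u$; for $B\subseteq A$, $B^{=}=\{w\in B^*:\mathrm{alph}(w)=B\}$. $u\lhd v$ means $u$ is a scattered subword of $v$; $\mathrm{Sub}_n(u)=\{w:|w|\le n,\ w\lhd u\}$; $u\sim_n v$ iff $\mathrm{Sub}_n(u)=\mathrm{Sub}_n(v)$. A factorization pattern is $(\vec u,\vec B)$ with $\vec u=(u_0,\dots,u_p)\in(A^* )^{p+1}$, $\vec B=(B_1,\dots,B_p)$ nonempty subsets of $A$. $L_n(\vec u,\vec B)=u_0(B_1^{=})^nu_1\cdots u_{p-1}(B_p^{=})^nu_p$; $(w_n)_n$ is $(\vec u,\vec B)$-adequate if $w_n\in L_n(\vec u,\vec B)$ for all $n$. A pattern is proper if: (1) for $1\le i\le p$ with $u_i\neq\varepsilon$, the first letter of $u_i$ is not in $B_i$, and for $0\le i\le p-1$ with $u_i\neq\varepsilon$, the last letter of $u_i$ is not in $B_{i+1}$; (2) for $1\le i\le p-1$ with $u_i=\varepsilon$, $B_i\not\subseteq B_{i+1}$ and $B_{i+1}\not\subseteq B_i$. *)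

(* Defs.v *)
From mathcomp Require Import all_boot.
Set Implicit Arguments. Unset Strict Implicit. Unset Printing Implicit Defensive.

Section Words.
Variable A : finType.

Definition alph (w : seq A) : {set A} := [set x in w].

Definition in_pow (B : {set A}) (n : nat) (w : seq A) : Prop :=
  exists ws : seq (seq A),
    [/\ size ws = n, all (fun x => alph x == B) ws & w = flatten ws].

(* w ∈ u0 (B1^=)^n u1 ... (Bp^=)^n up, with the pattern given as u0 and the
   list of pairs (B_i, u_i), i = 1..p *)
Fixpoint in_Ln_aux (n : nat) (u0 : seq A) (rest : seq ({set A} * seq A))
    (w : seq A) : Prop :=
  match rest with
  | [::] => w = u0
  | (B, u) :: r => exists x y, [/\ w = u0 ++ x ++ y, in_pow B n x & in_Ln_aux n u r y]
  end.

(* Factorization pattern (u_0..u_p) as a seq of size p+1 and (B_1..B_p) as a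
   seq of size p (B_i is nth set0 B (i-1)). *)
Definition in_Ln (n : nat) (u : seq (seq A)) (B : seq {set A}) (w : seq A) : Prop :=
  in_Ln_aux n (head [::] u) (zip B (behead u)) w.

Definition adequate (u : seq (seq A)) (B : seq {set A}) (v : nat -> seq A) : Prop :=
  forall n, in_Ln n u B (v n).

Definition uu (u : seq (seq A)) i := nth [::] u i.
Definition BB (B : seq {set A}) i := nth set0 B i.-1.  (* B_i for 1 <= i <= p *)

Definition proper_pattern (u : seq (seq A)) (B : seq {set A}) : Prop :=
  let p := size B in
  [/\ size u = p.+1,
      (forall i, 1 <= i <= p -> BB B i != set0),
      (forall i a s, 1 <= i <= p -> uu u i = a :: s -> a \notin BB B i),
      (forall i a s, i < p -> uu u i = rcons s a -> a \notin BB B i.+1) &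
      (forall i, 1 <= i < p -> uu u i = [::] ->
          ~~ (BB B i \subset BB B i.+1) /\ ~~ (BB B i.+1 \subset BB B i))].

(* scattered subword = subseq; Sub_n and ~_n *)
Definition Sub_n (n : nat) (u : seq A) : pred (seq A) :=
  fun w => (size w <= n) && subseq w u.

Definition sim_n (n : nat) (u v : seq A) : Prop := Sub_n n u =1 Sub_n n v.

End Words.

(* Main.v *)
Require Import Defs.
From mathcomp Require Import all_boot.
Set Implicit Arguments. Unset Strict Implicit. Unset Printing Implicit Defensive.

Fixpoint amem {A : finType} (e : seq (A + {set A})) (w : seq A) : Prop :=
  match e with
  | [::] => w = [::]
  | x :: r => match x with
     | inl a => amem r w \/ exists w', w = a :: w' /\ amem r w'
     | inr B => exists y z, [/\ w = y ++ z, all (fun c => c \in B) y & amem r z]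
     end
  end.

Lemma amem_nil {A : finType} (e : seq (A + {set A})) : amem e [::].
Proof.
elim: e => [//|[a|B] r IH] /=; first by left.
by exists [::], [::]; split.
Qed.

Lemma amem_behead {A : finType} (e : seq (A + {set A})) c w :
  amem e (c :: w) -> amem e w.
Proof.
elim: e w => [|[a|B] r IH] w //=.
- case=> [/IH H|[w' [[_ ->] H]]]; by left.
- case=> [[|b y] [z [Hw Hy Hz]]].
  + rewrite /= in Hw; subst z. exists [::], w. split=> //. exact: IH.
  + case: Hw => _ ->. exists y, z. move: Hy => /= /andP [_ Hy]. by split.
Qed.

Lemma amem_weak {A : finType} x (s : seq (A + {set A})) w :
  amem s w -> amem (x :: s) w.
Proof. case: x => [a|B] H /=; first by left. by exists [::], w; split. Qed.

Lemma amem_star {A : finType} (D : {set A}) s c w :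
  c \in D -> amem (inr D :: s) w -> amem (inr D :: s) (c :: w).
Proof.
move=> cD [y [z [-> Hy Hz]]]. exists (c :: y), z. by split => //=; rewrite cD.
Qed.

Lemma amem_intro {A : finType} (x : A + {set A}) s c w :
  (x = inl c \/ exists2 D, x = inr D & c \in D) ->
  amem s w -> amem (x :: s) (c :: w).
Proof.
case=> [->|[D -> cD]] H /=; first by right; exists w.
by apply: amem_star => //; apply: amem_weak.
Qed.

Lemma amem_pass {A : finType} (y : A + {set A}) s c w :
  (match y with inl b => b != c | inr D => c \notin D end) ->
  amem (y :: s) (c :: w) -> amem s (c :: w).
Proof.
case: y => [b|D] /= Hn.
- case=> // [[w' [[E _] _]]]. by rewrite E eqxx in Hn.
- case=> [[|b y] [z [Hw Hy Hz]]].
  + by rewrite /= in Hw; subst z.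
  + case: Hw => E _. subst b. move: Hy => /= /andP [cD _]. by rewrite cD in Hn.
Qed.

Lemma amem_step {A : finType} (y : A + {set A}) s c w :
  (match y with inl b => true | inr D => c \notin D end) ->
  amem (y :: s) (c :: w) -> amem s w.
Proof.
case: y => [b|D] /= Hn.
- case=> [/amem_behead //|[w' [[_ ->] H]]] //.
- move=> H. apply: (@amem_behead _ _ c). exact: (@amem_pass _ (inr D)).
Qed.

Definition compat {A : finType} (x y : A + {set A}) : bool :=
  match x, y with
  | inl a, inr D => a \notin D
  | inr C, inl b => b \notin C
  | inr C, inr D => ~~ (C \subset D) && ~~ (D \subset C)
  | inl _, inl _ => true
  end.

Definition nonemp {A : finType} (x : A + {set A}) : bool :=
  if x is inr C then C != set0 else true.

Fixpoint aproper {A : finType} (e : seq (A + {set A})) : bool :=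
  match e with
  | [::] => true
  | x :: r => [&& nonemp x, aproper r & (if r is y :: _ then compat x y else true)]
  end.

Lemma intro_letter {A : finType} (x : A + {set A}) :
  nonemp x -> exists c, (x = inl c \/ exists2 D, x = inr D & c \in D).
Proof.
case: x => [a|D] /=; first by exists a; left.
case/set0Pn => c cD. exists c; right; by exists D.
Qed.

Lemma no_absorb {A : finType} (r : seq (A + {set A})) x :
  aproper (x :: r) -> ~ (forall w, amem (x :: r) w -> amem r w).
Proof.
elim: r x => [|y r IH] x.
- rewrite /= andbT => nx H.
  have [c Hc] := intro_letter nx.
  have := H [:: c] (amem_intro Hc (amem_nil [::])). by [].
- move=> /and3P [nx pr cxy] H.
  have [c Hc Hstep] : exists2 c, (x = inl c \/ exists2 D, x = inr D & c \in D) &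
      (match y with inl b => true | inr D => c \notin D end : bool).
    case: x nx cxy {H} => [a|C] nx cxy.
    + exists a; first by left. by case: y cxy {pr}.
    + case: y cxy {pr} => [b|D] cxy.
      * have [c Hc] := intro_letter nx. by exists c.
      * case/andP: cxy => /subsetPn [c cC cD] _. exists c => //. right; by exists C.
  apply: (IH y pr) => w Hw.
  apply: (@amem_step _ y _ c); first exact: Hstep. apply: H. exact: amem_intro.
Qed.
Lemma single {A : finType} (y : A + {set A}) s :
  aproper (y :: s) -> exists c, amem (y :: s) [:: c].
Proof.
move=> /= /and3P [ny _ _]. have [c Hc] := intro_letter ny.
exists c. exact: amem_intro (amem_nil s).
Qed.

Lemma same_star {A : finType} (C : {set A}) s r :
  aproper (inr C :: s) ->
  (forall w, amem (inr C :: s) w -> amem (inr C :: r) w) ->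
  forall w, amem s w -> amem r w.
Proof.
case: s => [|z s'].
- by move=> _ H w ->; exact: amem_nil.
- move=> /and3P [_ pr cz] H w Hw.
  case: z H pr cz Hw => [b|D] H pr cz Hw.
  + have key : forall w', amem s' w' -> amem r (b :: w').
      move=> w' Hw'. apply: (@amem_pass _ (inr C) _ b w' cz). apply: H.
      apply: amem_weak. by right; exists w'.
    case: Hw => [Hw | [w' [-> Hw']]]; last exact: key.
    exact: amem_behead (key _ Hw).
  + case/andP: cz => _ /subsetPn [d dD dC].
    apply: (@amem_behead _ _ d). apply: (@amem_pass _ (inr C) _ d w dC).
    apply: H. apply: amem_weak. exact: amem_star.
Qed.

Lemma atoms_uniq {A : finType} (e f : seq (A + {set A})) :
  aproper e -> aproper f -> (forall w, amem e w <-> amem f w) -> e = f.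
Proof.
elim: e f => [|x r IH] [|y s] //.
- move=> _ pf H. have [c Hc] := single pf. by have := proj2 (H _) Hc.
- move=> pe _ H. have [c Hc] := single pe. by have := proj1 (H _) Hc.
- move=> pe pf H.
  have pr : aproper r by move: pe => /= /and3P [].
  have ps : aproper s by move: pf => /= /and3P [].
  have NAe := no_absorb pe; have NAf := no_absorb pf.
  case: x pe NAe H => [a|C] pe NAe H; case: y pf NAf H => [b|D] pf NAf H.
  + have rs : r = s.
      apply: IH => // w; split => Hw.
      * apply: (@amem_step _ (inl b) _ a) => //. apply/H. by right; exists w.
      * apply: (@amem_step _ (inl a) _ b) => //. apply/H. by right; exists w.
    subst s. case: (eqVneq a b) => [-> //|nab]. exfalso.
    apply: NAe => w [Hw|[w' [-> Hw']]] //.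
    apply: (@amem_pass _ (inl b)); first by rewrite eq_sym.
    apply/H; by right; exists w'.
  + exfalso; apply: NAe => w Hw.
    have [d dD] : exists d, d \in D by move: pf => /= /and3P [/set0Pn].
    apply: (@amem_step _ (inl a) _ d) => //. apply/H. apply: amem_star => //. exact/H.
  + exfalso; apply: NAf => w Hw.
    have [c cC] : exists c, c \in C by move: pe => /= /and3P [/set0Pn].
    apply: (@amem_step _ (inl b) _ c) => //. apply/H. apply: amem_star => //. exact/H.
  + case: (eqVneq C D) => [E|nCD].
    * subst D. have rs : r = s.
        apply: IH => // w; split.
        - apply: (same_star pe) => w' /H //.
        - apply: (same_star pf) => w' /H //.
      by rewrite rs.
    * exfalso. have : ~~ (C \subset D) || ~~ (D \subset C).
        by rewrite -negb_and -eqEsubset.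
      case/orP => /subsetPn [c cC cD].
      - apply: NAf => w Hw. apply: (@amem_step _ (inr D) _ c); first exact: cD.
        apply/H. apply: amem_star => //. exact/H.
      - apply: NAe => w Hw. apply: (@amem_step _ (inr C) _ c); first exact: cD.
        apply/H. apply: amem_star => //. exact/H.
Qed.
From mathcomp Require Import zify.

Fixpoint atoms' {A : finType} (u0 : seq A) (rest : seq ({set A} * seq A))
  : seq (A + {set A}) :=
  map inl u0 ++ (match rest with
                 | [::] => [::]
                 | (B, u) :: r => inr B :: atoms' u r end).

Lemma amem_cat_inl {A : finType} (s : seq A) l w :
  amem (map inl s ++ l) w <->
  exists w1 w2, [/\ w = w1 ++ w2, subseq w1 s & amem l w2].
Proof.
elim: s w => [|a s IH] w.
- split; first by move=> H; exists [::], w.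
  by case=> w1 [w2 [-> H1 H2]]; case: w1 H1.
- split.
  + case=> [/IH [w1 [w2 [-> H1 H2]]]|[w' [-> /IH [w1 [w2 [-> H1 H2]]]]]].
    * exists w1, w2; split => //. exact: (subseq_trans H1 (subseq_cons _ _)).
    * exists (a :: w1), w2; split => //=. by rewrite eqxx.
  + case=> [[|b w1] [w2 [-> H1 H2]]].
    * simpl; left. apply/IH. exists [::], w2. split => //; exact: sub0seq.
    * move: H1 => /=. case: (b =P a) => [-> H1|_ H1].
      - simpl; right. exists (w1 ++ w2); split => //. apply/IH. exists w1, w2. by split.
      - simpl; left. apply/IH. exists (b :: w1), w2. by split.
Qed.

Lemma subseq_split {A : finType} (w x1 x2 : seq A) :
  subseq w (x1 ++ x2) ->
  exists w1 w2, [/\ w = w1 ++ w2, subseq w1 x1 & subseq w2 x2].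
Proof.
elim: x1 w => [|a x1 IH] w; first by move=> H; exists [::], w.
case: w => [|b w]; first by move=> _; exists [::], [::]; split => //; exact: sub0seq.
move=> H.
have {H} : subseq (if b == a then w else b :: w) (x1 ++ x2) by exact: H.
case: (b =P a) => [-> /= /IH [w1 [w2 [-> H1 H2]]]|_ /IH [w1 [w2 [E H1 H2]]]].
- exists (a :: w1), w2; split => //=. by rewrite eqxx.
- exists w1, w2; split => //.
  exact: (subseq_trans H1 (subseq_cons _ _)).
Qed.

Lemma in_pow_sub {A : finType} (B : {set A}) n x y :
  in_pow B n x -> size y <= n -> all (fun c => c \in B) y -> subseq y x.
Proof.
case=> ws [<- Hall ->].
elim: ws y Hall => [|z ws IH] [|b y] //=; try by move=> *; exact: sub0seq.
move=> /andP [/eqP Hz Hall] Hs /andP [bB Hy].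
rewrite -cat1s. apply: cat_subseq; last exact: IH.
by rewrite sub1seq -Hz inE in bB *.
Qed.

Lemma in_pow_all {A : finType} (B : {set A}) n x y :
  in_pow B n x -> subseq y x -> all (fun c => c \in B) y.
Proof.
case=> ws [_ Hall ->] /mem_subseq Hsub. apply/allP => c /Hsub.
move/flattenP => [z zws cz]. move/allP: Hall => /(_ z zws) /eqP <-.
by rewrite inE.
Qed.

Lemma Lmem {A : finType} n (rest : seq ({set A} * seq A)) u0 x :
  in_Ln_aux n u0 rest x ->
  forall w, size w <= n -> (subseq w x <-> amem (atoms' u0 rest) w).
Proof.
elim: rest u0 x => [|[B u] r IH] u0 x /=.
- move=> -> w _. rewrite amem_cat_inl. split.
  + by move=> H; exists w, [::]; rewrite cats0.
  + by case=> w1 [w2 [-> H1 /= ->]]; rewrite cats0.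
- case=> x1 [y [-> Hp Hr]] w Hw. rewrite amem_cat_inl. split.
  + move/subseq_split => [w0 [w' [Ew H0 /subseq_split [w1 [w2 [Ew' H1 H2]]]]]].
    have Hs : size w2 <= n by move: Hw; rewrite Ew Ew' !size_cat; lia.
    exists w0, w'; split => //. exists w1, w2; split => //.
    * exact: in_pow_all Hp H1.
    * exact: (proj1 (IH _ _ Hr w2 Hs) H2).
  + case=> w0 [w' [Ew H0 [w1 [w2 [Ew' H1 H2]]]]].
    have Hs : size w2 <= n by move: Hw; rewrite Ew Ew' !size_cat; lia.
    have Hs1 : size w1 <= n by move: Hw; rewrite Ew Ew' !size_cat; lia.
    rewrite Ew. apply: cat_subseq => //. rewrite Ew'. apply: cat_subseq.
    * exact: in_pow_sub Hp Hs1 H1.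
    * exact: (proj2 (IH _ _ Hr w2 Hs) H2).
Qed.
Lemma aproper_cat_inl {A : finType} (s : seq A) (l : seq (A + {set A})) :
  aproper l ->
  (forall a s', s = rcons s' a -> (if l is inr D :: _ then a \notin D else true)) ->
  aproper (map inl s ++ l).
Proof.
elim: s => [//|a s IH] pl H /=.
apply/andP; split.
- apply: (IH pl) => a' s' E. apply: (H a' (a :: s')). by rewrite E.
- case: s IH H => [|b s] IH H //=.
  have := H a [::] erefl. by case: l {IH H} pl => [|[c|D] l'].
Qed.

Fixpoint Pprop {A : finType} (u0 : seq A) (rest : seq ({set A} * seq A)) : Prop :=
  match rest with
  | [::] => True
  | (B, u) :: r => [/\ B != set0, (forall a s, u0 = rcons s a -> a \notin B),
      (forall a s, u = a :: s -> a \notin B),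
      (u = [::] -> if r is (B', _) :: _ then ~~ (B \subset B') && ~~ (B' \subset B)
                   else true)
      & Pprop u r]
  end.

Lemma Pprop_aproper {A : finType} (u0 : seq A) rest :
  Pprop u0 rest -> aproper (atoms' u0 rest).
Proof.
elim: rest u0 => [|[B u] r IH] u0.
- move=> _. by apply: aproper_cat_inl.
- case=> nB Hl Hf He Hr. apply: aproper_cat_inl; last exact: Hl.
  have Hc : is_true (match atoms' u r with [::] => true | y :: _ => compat (inr B) y end).
    case: u Hf He Hr => [|a s] Hf He Hr.
    + case: r He {IH Hr} => [|[B' u'] r'] He //=. exact: He.
    + have -> : atoms' (a :: s) r = inl a :: atoms' s r by case: r {IH He Hr}.
      exact: (Hf a s erefl).
  have H3 : [&& nonemp (inr B : A + {set A}), aproper (atoms' u r)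
           & (if atoms' u r is y :: _ then compat (inr B) y else true)].
    by apply/and3P; split; [exact: nB | exact: IH | exact: Hc].
  exact H3.
Qed.

Definition notinl {A : finType} (X : seq (A + {set A})) : bool :=
  if X is inl _ :: _ then false else true.

Lemma cancel_inl {A : finType} (s t : seq A) (X Y : seq (A + {set A})) :
  notinl X -> notinl Y -> map inl s ++ X = map inl t ++ Y -> s = t /\ X = Y.
Proof.
elim: s t => [|a s IH] [|b t] hX hY /=.
- by [].
- by move=> E; rewrite E in hX.
- by move=> E; rewrite -E in hY.
- case=> -> /(IH _ hX hY) [-> ->]. by [].
Qed.

Lemma atoms_inj {A : finType} (u0 t0 : seq A) r1 r2 :
  atoms' u0 r1 = atoms' t0 r2 -> u0 = t0 /\ r1 = r2.
Proof.
elim: r1 u0 t0 r2 => [|[B u] r IH] u0 t0 [|[C t] r2] /= E.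
- by have [-> _] := cancel_inl (isT : notinl [::]) (isT : notinl [::]) E.
- by have [_ E'] := cancel_inl (isT : notinl [::]) (isT : notinl (inr C :: atoms' t r2)) E.
- by have [_ E'] := cancel_inl (isT : notinl (inr B :: atoms' u r)) (isT : notinl [::]) E.
- have [-> E'] := cancel_inl (isT : notinl (inr B :: atoms' u r))
                             (isT : notinl (inr C :: atoms' t r2)) E.
  case: E' => -> /IH [-> ->]. by [].
Qed.

Lemma proper_Pprop {A : finType} (u : seq (seq A)) (B : seq {set A}) :
  proper_pattern u B -> Pprop (head [::] u) (zip B (behead u)).
Proof.
case=> Hsz Hne Hf Hl He.
have key : forall j, j <= size B ->
    Pprop (nth [::] u (size B - j)) (zip (drop (size B - j) B) (drop (size B - j).+1 u)).
  elim=> [|j IHj] Hj.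
  - rewrite subn0 (@drop_oversize _ (size B) B (leqnn _)). by case: (drop _ u).
  - have Hk : size B - j.+1 < size B by lia.
    have E1 : size B - j = (size B - j.+1).+1 by lia.
    move: IHj; rewrite E1 => IHj.
    move: Hk; set k := size B - j.+1 => Hk.
    rewrite (drop_nth set0 Hk) (drop_nth [::] (_ : k.+1 < size u)); last by lia.
    split.
    + exact: (Hne k.+1).
    + move=> a s E. exact: (Hl k a s Hk E).
    + move=> a s E. by apply: (Hf k.+1 a s).
    + move=> E. case: (ltnP k.+1 (size B)) => Hk1.
      * rewrite (drop_nth set0 Hk1) (drop_nth [::] (_ : k.+2 < size u)); last by lia.
        have Hk2 : 1 <= k.+1 < size B by rewrite Hk1.
        have [h1 h2] := He k.+1 Hk2 E.
        by apply/andP; split.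
      * rewrite (@drop_oversize _ k.+1 B Hk1). by case: (drop _ u).
    + apply: IHj. lia.
have := key (size B) (leqnn _).
by rewrite subnn drop0 nth0 drop1.
Qed.

Lemma adequate_mem {A : finType} (u : seq (seq A)) B v :
  adequate u B v ->
  forall x, subseq x (v (size x)) <-> amem (atoms' (head [::] u) (zip B (behead u))) x.
Proof. move=> H x. exact: (Lmem (H (size x)) (leqnn _)). Qed.

Lemma pat_rebuild {A : finType} (u : seq (seq A)) (B : seq {set A}) :
  size u = (size B).+1 ->
  B = unzip1 (zip B (behead u)) /\ u = head [::] u :: unzip2 (zip B (behead u)).
Proof.
case: u => //= a u' [Hs]. rewrite unzip1_zip ?unzip2_zip //; lia.
Qed.

Theorem lemma4 (A : finType) (u t : seq (seq A)) (B C : seq {set A})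
    (v w : nat -> seq A) :
  proper_pattern u B -> proper_pattern t C ->
  adequate u B v -> adequate t C w ->
  (forall n, sim_n n (v n) (w n)) ->
  u = t /\ B = C.
Proof.
move=> pu pt au aw sim.
have E : atoms' (head [::] u) (zip B (behead u)) = atoms' (head [::] t) (zip C (behead t)).
  apply: atoms_uniq.
  - exact: Pprop_aproper (proper_Pprop pu).
  - exact: Pprop_aproper (proper_Pprop pt).
  - move=> x.
    have S := sim (size x) x. rewrite /Sub_n leqnn /= in S.
    split => Hx.
    + apply/(adequate_mem aw). rewrite -S. exact/(adequate_mem au).
    + apply/(adequate_mem au). rewrite S. exact/(adequate_mem aw).
have [E0 E1] := atoms_inj E.
case: pu => Hu _ _ _ _; case: pt => Ht _ _ _ _.
have [hB hu] := pat_rebuild Hu; have [hC ht] := pat_rebuild Ht.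
split; first by rewrite hu ht E0 E1.
by rewrite hB hC E1.
Qed.
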